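(* The set $\widehat{c}\setminus c$ is strongly $\mathfrak{c}$-algebrable in the algebra $\ell^\infty$ (with pointwise operations).
   Context: $\ell^\infty$ is the algebra of bounded real sequences with coordinatewise addition, scalar multiplication and multiplication; $c$ is the set of convergent sequences. A Banach limit is a linear functional $L\colon\ell^\infty\to\mathbb R$ such that for every $(x_n)\in\ell^\infty$: (1) if $x_n\ge0$ for all $n$ then $L((x_n))\ge0$; (2) $L((x_2,x_3,\dots))=L((x_1,x_2,\dots))$; (3) $L((1,1,\dots))=1$. $\widehat{c}$ is the set of $x\in\ell^\infty$ for which there is $s\in\mathbb R$ with $L(x)=s$ for every Banach limit $L$. A subset $A$ of a commutative algebra $\mathcal L$ is strongly $\kappa$-algebrable if $A\cup\{0\}$ contains a $\kappa$-generated subalgebra (minimal number of generators of cardinality $\kappa$) which is isomorphic to a free algebra; equivalently, there is a set $Z\subset\mathcal L$ of cardinality $\kappa$ such that for every $n$, every non-zero polynomial $P$ in $n$ variables without constant term and all distinct $z_1,\dots,z_n\in Z$, $P(z_1,\dots,z_n)\in A\setminus\{0\}$. $\mathfrak c$ is the cardinality of the continuum. *)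

(* Defs.v *)
From Stdlib Require Import Reals.
From mathcomp Require Import all_boot all_algebra.
From mathcomp Require Import Rstruct.
From mathcomp Require Import mpoly.

Set Implicit Arguments.
Unset Strict Implicit.
Unset Printing Implicit Defensive.

Definition bounded_seq (x : nat -> R) : Prop :=
  exists M : R, forall n : nat, (Rabs (x n) <= M)%R.

(* Banach limit: a linear functional on l^oo (values outside l^oo are irrelevant)
   that is positive, shift-invariant and maps the constant 1 to 1. *)
Definition is_banach_limit (L : (nat -> R) -> R) : Prop :=
  (forall (x y : nat -> R) (a b : R), bounded_seq x -> bounded_seq y ->
     L (fun n => a * x n + b * y n)%R = (a * L x + b * L y)%R) /\
  (forall x : nat -> R, bounded_seq x -> (forall n, 0 <= x n)%R -> (0 <= L x)%R) /\
  (forall x : nat -> R, bounded_seq x -> L (fun n => x (S n)) = L x) /\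
  L (fun _ => 1%R) = 1%R.

Definition c_hat (x : nat -> R) : Prop :=
  bounded_seq x /\ exists s : R, forall L, is_banach_limit L -> L x = s.

Definition convergent (x : nat -> R) : Prop := exists l : R, Un_cv x l.

Definition mpoly_eval_seq (n : nat) (P : {mpoly R[n]}) (z : 'I_n -> nat -> R)
  : nat -> R := fun k => P.@[fun i => z i k].

(* Strong kappa-algebrability (pointwise algebra of real sequences) with
   kappa = continuum: a set Z of l^oo of cardinality |R| (image of an
   injection from R) such that every nonzero polynomial without constant term
   evaluated at distinct elements of Z lands in A \ {0}. *)
Section PolyHelpers.
Local Open Scope ring_scope.
Definition no_const_term (n : nat) (P : {mpoly R[n]}) : Prop := P@_0%MM = 0.
Definition nonzero_mpoly (n : nat) (P : {mpoly R[n]}) : Prop := P != 0.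
End PolyHelpers.

Definition strongly_c_algebrable (A : (nat -> R) -> Prop) : Prop :=
  exists f : R -> (nat -> R),
    (forall r s, f r = f s -> r = s) /\
    (forall r, bounded_seq (f r)) /\
    forall (n : nat) (P : {mpoly R[n]}) (idx : 'I_n -> R),
      injective idx -> nonzero_mpoly P -> no_const_term P ->
      A (mpoly_eval_seq P (fun i => f (idx i))) /\
      mpoly_eval_seq P (fun i => f (idx i)) <> (fun _ => 0%R).

(* Main.v *)
Require Import Defs.
From Stdlib Require Import Reals FunctionalExtensionality.
From mathcomp Require Import all_boot all_order all_algebra.
From mathcomp Require Import Rstruct lra zify.
From mathcomp Require Import mpoly.

Set Implicit Arguments.
Unset Strict Implicit.
Unset Printing Implicit Defensive.
Import Order.TTheory GRing.Theory Num.Theory.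
Local Open Scope ring_scope.

Lemma RabsN (u : R) : Rabs u = `|u|. Proof. reflexivity. Qed.

Section BL.
Variable L : (nat -> R) -> R.
Hypothesis hL : is_banach_limit L.

Lemma bs_shift x k : bounded_seq x -> bounded_seq (fun n => x (n + k)%N).
Proof. move=> [M hM]; exists M => n; exact: hM. Qed.

Lemma bs_lin (x y : nat -> R) a b : bounded_seq x -> bounded_seq y ->
  bounded_seq (fun n => a * x n + b * y n).
Proof.
move=> [M hM] [N hN]; exists (`|a| * M + `|b| * N) => n.
rewrite RabsN; apply: le_trans (ler_normD _ _) _; rewrite !normrM.
apply: lerD; apply: ler_wpM2l => //; first [exact: hM | exact: hN].
Qed.

Lemma bs_scal a (x : nat -> R) : bounded_seq x -> bounded_seq (fun n => a * x n).
Proof.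
move=> [M hM]; exists (`|a| * M) => n; rewrite RabsN normrM.
by apply: ler_wpM2l => //; exact: hM.
Qed.

Lemma BL_add x y : bounded_seq x -> bounded_seq y ->
  L (fun n => x n + y n) = L x + L y.
Proof.
move=> bx by_; case: hL => [lin _].
have -> : (fun n => x n + y n) = (fun n => 1 * x n + 1 * y n).
  by apply: functional_extensionality => n; rewrite !mul1r.
by rewrite lin // !mul1r.
Qed.

Lemma BL_scal a x : bounded_seq x -> L (fun n => a * x n) = a * L x.
Proof.
move=> bx; case: hL => [lin _].
have -> : (fun n => a * x n) = (fun n => a * x n + 0 * x n).
  by apply: functional_extensionality => n; rewrite mul0r addr0.
by rewrite lin // mul0r addr0.
Qed.

Lemma BL_mono x y : bounded_seq x -> bounded_seq y -> (forall n, x n <= y n) ->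
  L x <= L y.
Proof.
move=> bx by_ hxy; case: hL => [lin [pos _]].
have h := pos (fun n => 1 * y n + (-1) * x n) (bs_lin _ _ by_ bx).
rewrite lin // in h.
have : 0 <= 1 * L y + -1 * L x by apply: h => n; have := hxy n; lra.
lra.
Qed.

Lemma BL_tail x k : bounded_seq x -> L (fun n => x (n + k)%N) = L x.
Proof.
move=> bx; case: hL => [_ [_ [sh _]]].
elim: k => [|k IH].
  by congr L; apply: functional_extensionality => n; rewrite addn0.
rewrite -IH -(sh _ (bs_shift k bx)).
by congr L; apply: functional_extensionality => n; rewrite addSnnS.
Qed.

Fixpoint sumR (F : nat -> R) (N : nat) : R :=
  match N with O => 0 | S N => sumR F N + F N end.

Lemma sumR_0 F : sumR F 0 = 0. Proof. by []. Qed.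
Lemma sumR_S F N : sumR F N.+1 = sumR F N + F N. Proof. by []. Qed.

Lemma bs_sumR (F : nat -> nat -> R) N : (forall j, bounded_seq (F j)) ->
  bounded_seq (fun n => sumR (F ^~ n) N).
Proof.
move=> hF; elim: N => [|N [M hM]] /=; first by exists 0 => n; rewrite RabsN normr0.
case: (hF N) => [K hK]; exists (M + K) => n.
rewrite RabsN; apply: le_trans (ler_normD _ _) _; apply: lerD; [exact: hM|exact: hK].
Qed.

Lemma BL_sum x N : bounded_seq x ->
  L (fun n => sumR (fun j => x (n + j)%N) N) = N%:R * L x.
Proof.
move=> bx; elim: N => [|N IH] /=.
  have -> : (fun _ : nat => 0) = (fun n => 0 * x n).
    by apply: functional_extensionality => n; rewrite mul0r.
  by rewrite BL_scal // !mul0r.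
rewrite BL_add ?IH ?BL_tail //; last exact: bs_shift.
  by rewrite mulrSr mulrDl mul1r.
exact: (@bs_sumR (fun j n => x (n + j)%N) N (fun j => bs_shift j bx)).
Qed.

Lemma sumR0 F N : (forall j, (j < N)%N -> F j = 0) -> sumR F N = 0.
Proof.
elim: N => [|N IH] h //=; rewrite IH; last by move=> j hj; apply: h; apply: ltnW.
by rewrite h // RplusE addr0.
Qed.

Lemma sumR_le1 F N : (forall j, 0 <= F j <= 1) ->
  (forall j1 j2, (j1 < N)%N -> (j2 < N)%N -> F j1 <> 0 -> F j2 <> 0 -> j1 = j2) ->
  sumR F N <= 1.
Proof.
move=> hb; elim: N => [|N IH] h; rewrite ?sumR_0 ?sumR_S; first lra.
case: (eqVneq (F N) 0) => hN.
  rewrite hN addr0; apply: IH => j1 j2 h1 h2; apply: h; exact: ltnW.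
rewrite sumR0 ?add0r; first by case/andP: (hb N).
move=> j hj; case: (eqVneq (F j) 0) => // /eqP hj0.
by have := h j N (ltnW hj) (ltnSn N) hj0 (elimN eqP hN) => e; rewrite e ltnn in hj.
Qed.

Definition S2 (n : nat) : bool := (n == 2 ^ trunc_log 2 n)%N.
Definition I2 (n : nat) : R := if S2 n then 1 else 0.

Lemma S2_exp k : S2 (2 ^ k)%N.
Proof. by rewrite /S2 trunc_expnK. Qed.

Lemma S2_sep m N a b : (2 ^ N <= m)%N -> (m <= a)%N -> (a < b)%N -> (b < m + N)%N ->
  S2 a -> S2 b -> False.
Proof.
rewrite /S2 => hm ha hab hb /eqP ea /eqP eb.
set p := trunc_log 2 a in ea; set q := trunc_log 2 b in eb.
have hpq : (p < q)%N.
  by rewrite -(ltn_exp2l _ _ (isT : 1 < 2)%N) -ea -eb.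
have h2 : (2 * 2 ^ p <= 2 ^ q)%N by rewrite -expnS leq_exp2l.
have hN : (N < 2 ^ N)%N by apply: ltn_expl.
lia.
Qed.

Lemma bs_I2 : bounded_seq I2.
Proof. by exists 1 => n; rewrite RabsN /I2; case: S2; rewrite ?normr1 ?normr0. Qed.

Lemma BL_I2 : L I2 = 0.
Proof.
have pos : 0 <= L I2.
  by case: hL => [_ [p _]]; apply: p; [exact: bs_I2| move=> n; rewrite /I2; case: S2].
have ub : forall N, (0 < N)%N -> N%:R * L I2 <= 1.
  move=> N hN.
  rewrite -(BL_tail (2 ^ N) bs_I2) -BL_sum; last exact: bs_shift bs_I2.
  case: hL => [_ [_ [_ one]]]; rewrite -one.
  apply: BL_mono.
  - exact: (@bs_sumR (fun j n => I2 (n + j + 2 ^ N)%N) N (fun j => bs_shift j (bs_shift (2 ^ N) bs_I2))).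
  - by exists 1 => n; rewrite RabsN normr1.
  move=> n; apply: sumR_le1.
    by move=> j; rewrite /I2; case: S2 => /=; lra.
  move=> j1 j2 h1 h2; rewrite /I2.
  case e1: (S2 _) => //; case e2: (S2 _) => // _ _.
  case: (ltngtP j1 j2) => // hlt.
  - exfalso; apply: (@S2_sep (n + 2 ^ N) N (n + j1 + 2 ^ N) (n + j2 + 2 ^ N)) => //; lia.
  - exfalso; apply: (@S2_sep (n + 2 ^ N) N (n + j2 + 2 ^ N) (n + j1 + 2 ^ N)) => //; lia.
apply/eqP; rewrite eq_le pos andbT.
rewrite leNgt; apply/negP => hpos.
have [N hN] : exists N : nat, (L I2)^-1 < N%:R.
  exists (Num.trunc (L I2)^-1).+1. exact: Num.Theory.truncnS_gt.
have := ub N.+1 isT.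
have hNN : (L I2)^-1 < N.+1%:R by apply: lt_trans hN _; rewrite ltr_nat.
have : 1 < N.+1%:R * L I2.
  by rewrite -(ltr_pdivrMr _ _ hpos) mul1r.
lra.
Qed.

Lemma BL_supp x : bounded_seq x -> (forall n, ~~ S2 n -> x n = 0) -> L x = 0.
Proof.
move=> [M hM] hx.
have bx : bounded_seq x by exists M.
have hb : forall n, -M * I2 n <= x n <= M * I2 n.
  move=> n; have := hM n; rewrite RabsN /I2; case e: (S2 n).
    by rewrite !mulr1 => h; rewrite -ler_norml.
  by rewrite hx ?e // !mulr0 lexx.
have bI : bounded_seq (fun n => M * I2 n) by exact: (bs_scal M bs_I2).
have bI' : bounded_seq (fun n => - M * I2 n) by exact: (bs_scal (-M) bs_I2).
have h1 : L (fun n => - M * I2 n) <= L x.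
  by apply: BL_mono => // n; case/andP: (hb n).
have h2 : L x <= L (fun n => M * I2 n).
  by apply: BL_mono => // n; case/andP: (hb n).
rewrite !BL_scal ?BL_I2 ?mulr0 in h1 h2; try exact: bs_I2.
by apply/eqP; rewrite eq_le h2 h1.
Qed.

End BL.

Definition code := (nat * seq (int * (nat * nat)))%type.
Definition val (p : nat * nat) : R := (p.1.+1%:R)^-1 ^+ p.2.
Definition fl (m : nat) (r : R) : int := Num.floor (r * 2%:R ^+ m).
Definition gc (c : code) (r : R) : R :=
  head 0 [seq val p.2 | p <- c.2 & p.1 == fl c.1 r].
Definition enumc (k : nat) : option code := omap snd (@unpickle (nat * code)%type k).

Lemma val_01 p : 0 <= val p <= 1.
Proof.
rewrite /val; have h0 : 0 <= (p.1.+1%:R : R)^-1 by rewrite invr_ge0.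
have h1 : (p.1.+1%:R : R)^-1 <= 1 by rewrite invf_le1 ?ler1n ?ltr0n.
by rewrite exprn_ge0 //= exprn_ile1.
Qed.

Lemma gc_01 c r : 0 <= gc c r <= 1.
Proof.
rewrite /gc; case: [seq _ <- _ | _] => [|p s] /=; first by rewrite lexx ler01.
exact: val_01.
Qed.

Lemma fl_sep r s : r <> s -> exists m0, forall m, (m0 <= m)%N -> fl m r <> fl m s.
Proof.
move=> hrs; have hd : 0 < `|r - s| by rewrite normr_gt0 subr_eq0; apply/eqP.
exists (Num.trunc (`|r - s|)^-1).+1 => m hm.
have h1 : (`|r - s|)^-1 < m%:R.
  apply: lt_le_trans (Num.Theory.truncnS_gt _) _; by rewrite ler_nat.
have h2 : (m%:R : R) <= 2%:R ^+ m.
  by rewrite -natrX ler_nat ltnW // ltn_expl.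
have h3 : 1 < `|r - s| * 2%:R ^+ m.
  rewrite -(ltr_pdivrMl _ _ hd) mulr1; exact: lt_le_trans h1 h2.
rewrite /fl => he.
have := Num.Theory.floor_itv (r * 2%:R ^+ m); have := Num.Theory.floor_itv (s * 2%:R ^+ m).
rewrite he; set z := Num.floor _ => /andP[a1 a2] /andP[b1 b2].
rewrite intrD in a2 b2.
have e : `|r - s| * 2%:R ^+ m = `|r * 2%:R ^+ m - s * 2%:R ^+ m|.
  by rewrite -mulrBl normrM [`|2%:R ^+ m|]ger0_norm // exprn_ge0.
rewrite e in h3; move: h3; rewrite ltr_normr => /orP[] ?; lra.
Qed.

Lemma hit (I : finType) (idx : I -> R) (e : I -> nat * nat) : injective idx ->
  exists c : code, forall i, gc c (idx i) = val (e i).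
Proof.
move=> hi.
have : forall p : I * I, exists m0, p.1 != p.2 -> forall m, (m0 <= m)%N ->
    fl m (idx p.1) <> fl m (idx p.2).
  move=> [i j] /=; case: (eqVneq i j) => [_|hij]; first by exists 0%N.
  have [m0 hm0] := fl_sep (fun E => elimN eqP hij (hi _ _ E)); by exists m0.
case/fin_all_exists => mf hmf.
pose m := (\max_(p : I * I) mf p)%N.
exists (m, [seq (fl m (idx i), e i) | i <- enum I]) => i.
rewrite /gc /= filter_map.
have -> : [seq j <- enum I | preim (fun i0 => (fl m (idx i0), e i0))
      (fun p => p.1 == fl m (idx i)) j] = [seq j <- enum I | pred1 i j].
  apply: eq_filter => j /=; case: (eqVneq j i) => [->|hji]; first by rewrite eqxx.
  apply/eqP; apply: (hmf (j, i)) => //; exact: leq_bigmax.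
by rewrite filter_pred1_uniq ?enum_uniq ?mem_enum.
Qed.

Lemma enumc_inf (c : code) N : exists k, (N <= k)%N /\ enumc k = Some c.
Proof.
pose s := [seq pickle (t, c) | t <- iota 0 N.+1].
have us : uniq s.
  rewrite map_inj_uniq ?iota_uniq // => t1 t2 /(pcan_inj (@pickleK _)) [] //.
case: (boolP (all (fun k => k < N)%N s)) => [ha|].
  have := uniq_leq_size us (s2 := iota 0 N) => /(_ _) h.
  have : (size s <= size (iota 0 N))%N.
    apply: h => k ks; rewrite mem_iota /=; exact: (allP ha).
  by rewrite size_map !size_iota ltnn.
case/allPn => k /mapP [t _ ->]; rewrite -leqNgt => hk.
by exists (pickle (t, c)); split => //; rewrite /enumc pickleK.
Qed.

Lemma meval_zero n (P : {mpoly R[n]}) : P@_0%MM = 0 -> P.@[fun _ => 0] = 0.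
Proof.
move=> h0; rewrite mevalE big1_seq // => m _.
case: (eqVneq m 0%MM) => [->|hm]; first by rewrite h0 mul0r.
case: (pickP (fun i => m i != 0%N)) => [i /= hi|hn].
  by rewrite (bigD1 i) //= expr0n (negbTE hi) mul0r mulr0.
exfalso; move/eqP: hm; apply; apply/mnmP => i; rewrite mnm0E.
by have := hn i => /= /negbFE /eqP.
Qed.

Lemma meval_bound n (P : {mpoly R[n]}) (v : 'I_n -> R) : (forall i, `|v i| <= 1) ->
  `|P.@[v]| <= \sum_(m <- msupp P) `|P@_m|.
Proof.
move=> hv; rewrite mevalE; apply: le_trans (ler_norm_sum _ _ _) _.
apply: ler_sum => m _; rewrite normrM -[leRHS]mulr1; apply: ler_wpM2l => //.
rewrite normr_prod; apply: prodr_ile1 => i _.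
by rewrite normr_ge0 normrX /= exprn_ile1.
Qed.

Lemma digits_inj D n (a b : 'I_n -> nat) : (forall i, a i < D)%N -> (forall i, b i < D)%N ->
  (\sum_i a i * D ^ i = \sum_i b i * D ^ i)%N -> a =1 b.
Proof.
elim: n a b => [|n IH] a b ha hb; first by move=> _ [].
rewrite !big_ord_recl /= !expn0 !muln1.
have e : forall c : 'I_n.+1 -> nat, (\sum_(i < n) c (lift ord0 i) * D ^ bump 0 i =
    D * \sum_(i < n) c (lift ord0 i) * D ^ i)%N.
  move=> c; rewrite big_distrr /=; apply: eq_bigr => i _.
  by rewrite /bump /= add1n expnS mulnCA.
rewrite !e => hs.
have h0 : a ord0 = b ord0.
  have := congr1 (modn^~ D) hs; rewrite ![(_ + D * _)%N]addnC ![(D * _)%N]mulnC !modnMDl !modn_small //.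
have hr : (\sum_(i < n) a (lift ord0 i) * D ^ i = \sum_(i < n) b (lift ord0 i) * D ^ i)%N.
  have hD : (0 < D)%N by apply: leq_ltn_trans (ha ord0).
  rewrite h0 in hs; move/eqP: hs; rewrite eqn_add2l eqn_mul2l eqn0Ngt hD /= => /eqP //.
have := IH (fun i => a (lift ord0 i)) (fun i => b (lift ord0 i)) (fun i => ha _) (fun i => hb _) hr.
move=> hl i; case: (unliftP ord0 i) => [j ->|->] //; exact: hl.
Qed.

Lemma nonroot n (P : {mpoly R[n]}) : P != 0 ->
  exists j D, P.@[fun i => val (j, D ^ i)%N] != 0.
Proof.
move=> hP.
pose D := msize P.
pose e (m : 'X_{1..n}) := (\sum_i m i * D ^ i)%N.
pose q : {poly R} := \sum_(m <- msupp P) P@_m *: 'X^(e m).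
have hq : forall t, q.[t] = P.@[fun i => t ^+ (D ^ i)].
  move=> t; rewrite mevalE horner_sum; apply: eq_bigr => m _.
  rewrite hornerZ hornerXn; congr (_ * _).
  rewrite /e -prodrXr; apply: eq_bigr => i _; by rewrite -exprM mulnC.
have hlt : forall m, m \in msupp P -> forall i, (m i < D)%N.
  move=> m hm i; apply: leq_ltn_trans (msize_mdeg_lt hm).
  by rewrite mdegE (bigD1 i) //= leq_addr.
have [m0 hm0] : exists m0, m0 \in msupp P.
  case E: (msupp P) => [|m0 s]; last by exists m0; rewrite in_cons eqxx.
  by move/eqP: E; rewrite msupp_eq0 (negbTE hP).
have hq0 : q != 0.
  apply/eqP => /(congr1 (fun p : {poly R} => p`_(e m0))).
  rewrite coef0 coef_sum (bigD1_seq m0) ?msupp_uniq //= coefZ coefXn eqxx mulr1.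
  rewrite big1_seq ?addr0; last first.
    move=> m /andP[hm hmin]; rewrite coefZ coefXn.
    case: (eqVneq (e m0) (e m)) => [he|]; last by rewrite mulr0.
    exfalso; move/negP: hm; apply; apply/eqP/mnmP.
    apply: (@digits_inj D n (fun i => m i) (fun i => m0 i)); last by symmetry; exact: he.
      exact: hlt.
    exact: hlt.
  by apply/eqP; rewrite -mcoeff_msupp.
pose rs := [seq (j.+1%:R : R)^-1 | j <- iota 0 (size q)].
have urs : uniq rs.
  rewrite map_inj_uniq ?iota_uniq // => j k /invr_inj /eqP.
  by rewrite eqr_nat eqSS => /eqP.
case: (boolP (all (root q) rs)) => [ha|].
  by have := max_poly_roots hq0 ha urs; rewrite size_map size_iota ltnn.
case/allPn => t /mapP [j _ ->] hr.
exists j, D; rewrite /val /= -hq; exact: hr.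
Qed.

Definition fseq (r : R) (n : nat) : R :=
  if S2 n then (if enumc (trunc_log 2 n) is Some c then gc c r else 0) else 0.

Lemma fseq_01 r n : 0 <= fseq r n <= 1.
Proof.
rewrite /fseq; case: S2; last by rewrite lexx ler01.
case: enumc => [c|]; [exact: gc_01 | by rewrite lexx ler01].
Qed.

Lemma fseq_norm r n : `|fseq r n| <= 1.
Proof. by case/andP: (fseq_01 r n) => h0 h1; rewrite ger0_norm. Qed.

Lemma fseq_off r n : ~~ S2 n -> fseq r n = 0.
Proof. by rewrite /fseq => /negbTE ->. Qed.

Lemma fseq_at c k r : enumc k = Some c -> fseq r (2 ^ k)%N = gc c r.
Proof. by rewrite /fseq S2_exp trunc_expnK // => ->. Qed.

Lemma notS2 k : ~~ S2 (2 ^ k.+1 + 1)%N.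
Proof.
rewrite /S2; set t := trunc_log _ _; apply/eqP => E.
have := congr1 odd E; rewrite oddD oddX /= oddX /=.
case: t E => [|t] //= E _.
have : (0 < 2 ^ k.+1)%N by rewrite expn_gt0.
rewrite expn0 in E; lia.
Qed.

Theorem theorem3p3 :
  strongly_c_algebrable (fun x : nat -> R => c_hat x /\ ~ convergent x).
Proof.
exists fseq; split; [|split].
- move=> r s hrs; case: (eqVneq r s) => // /eqP hne; exfalso.
  have hi : injective (fun b : bool => if b then r else s).
    case; case => //= E; exfalso; apply: hne; by rewrite E.
  have [c hc] := hit (fun b : bool => if b then (0%N, 0%N) else (1%N, 1%N)) hi.
  have [k [_ hk]] := enumc_inf c 0.
  have := congr1 (fun f => f (2 ^ k)%N) hrs => /=.
  rewrite !(fseq_at _ hk) (hc true) (hc false) /val /= expr0 expr1 => E.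
  have : (2%:R : R)^-1 < 1 by rewrite invf_lt1 ?ltr1n ?ltr0n.
  by rewrite -E ltxx.
- by move=> r; exists 1 => n; rewrite RabsN; exact: fseq_norm.
move=> n P idx hinj hP h0.
set x := mpoly_eval_seq P (fun i => fseq (idx i)).
have hx : forall k, x k = P.@[fun i => fseq (idx i) k] by [].
have bx : bounded_seq x.
  exists (\sum_(m <- msupp P) `|P@_m|) => k; rewrite RabsN hx.
  by apply: meval_bound => i; exact: fseq_norm.
have x0 : forall k, ~~ S2 k -> x k = 0.
  move=> k hk; rewrite hx -(meval_zero h0); apply: meval_eq => i.
  exact: fseq_off.
have [j [D hC]] := nonroot hP.
set C := P.@[_] in hC.
have [c hc] := hit (fun i : 'I_n => (j, D ^ i)%N) hinj.
have xC : forall N, exists k, (N <= k)%N /\ x k = C.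
  move=> N; have [k [hk ek]] := enumc_inf c N.
  exists (2 ^ k)%N; split; first by apply: leq_trans hk (ltnW (ltn_expl _ _)).
  rewrite hx /C; apply: meval_eq => i; rewrite (fseq_at _ ek); exact: hc.
split; last first.
  move=> E; have [k [_ ek]] := xC 0%N.
  by move/eqP: hC; apply; rewrite -ek E.
split.
  split => //; exists 0 => L hL; apply: (BL_supp hL bx); exact: x0.
case=> l hl.
have hCp : 0 < `|C| / 2 by rewrite divr_gt0 // normr_gt0.
have hCp' : Rlt 0 (`|C| / 2) by apply/RltP.
have [N hN] := hl (`|C| / 2) hCp'.
have [k [hk ek]] := xC N.
have h1 := hN k (elimT ssrnat.leP hk).
have hN2 : (N <= 2 ^ N.+1 + 1)%N.
  have := ltn_expl N.+1 (isT : (1 < 2)%N); lia.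
have h2 := hN (2 ^ N.+1 + 1)%N (elimT ssrnat.leP hN2).
rewrite /Rdist in h1 h2; move/RltP: h1; move/RltP: h2.
rewrite ek x0 ?notS2 // !RabsN => h2 h1.
have := ler_distD l C 0; rewrite subr0 => h3.
have : `|l - 0| = `|0 - l| by rewrite distrC.
have : `|C - l| = `|l - C| by rewrite distrC.
lra.
Qed.
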